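(* Let $\Sigma$ be a ranked alphabet, $B$ a strong bimonoid and $\mathcal{A}$ a $(\Sigma,B)$-wta. If $B$ is locally finite, or if $B$ is multiplicatively locally finite and $\mathcal{A}$ is bottom-up deterministic, then the Nerode $(\Sigma,B)$-algebra $\mathcal{N}(\mathcal{A})$ is finite and $[\![\mathcal{A}]\!]^{\mathrm{init}}=[\![\mathrm{rel}(\mathcal{N}(\mathcal{A}))]\!]^{\mathrm{init}}$.
   Context: Ranked alphabet $\Sigma$ ($\Sigma^{(0)}\ne\emptyset$), trees $T_\Sigma$; strong bimonoid $(B,\oplus,\otimes,\mathbb{0},\mathbb{1})$ (commutative monoid $(B,\oplus,\mathbb{0})$, monoid $(B,\otimes,\mathbb{1})$, $\mathbb{0}\ne\mathbb{1}$, $\mathbb{0}$ absorbing, no distributivity). $B$ is locally finite if every finite subset generates a finite subalgebra of $(B,\oplus,\otimes,\mathbb{0},\mathbb{1})$; multiplicatively locally finite if every finite subset generates a finite submonoid of $(B,\otimes,\mathbb{1})$. $(\Sigma,B)$-wta $\mathcal{A}=(Q,\delta,F)$: $Q$ finite nonempty, $\delta_k:Q^k\times\Sigma^{(k)}\times Q\to B$, $F:Q\to B$. Vector algebra $\mathrm{V}(\mathcal{A})=(B^Q,\delta_{\mathcal{A}})$, $\delta_{\mathcal{A}}(\sigma)(v_1,\dots,v_k)_q=\bigoplus_{p_1,\dots,p_k}\big(\bigotimes_{i=1}^k(v_i)_{p_i}\big)\otimes\delta_k(p_1\dots p_k,\sigma,q)$; $h_{\mathrm{V}(\mathcal{A})}$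 the unique homomorphism from $T_\Sigma$; $[\![\mathcal{A}]\!]^{\mathrm{init}}(\xi)=\bigoplus_q h_{\mathrm{V}(\mathcal{A})}(\xi)_q\otimes F_q$. Bottom-up deterministic: for all $k,\sigma,q_1,\dots,q_k$ at most one $q$ with $\delta_k(q_1\dots q_k,\sigma,q)\ne\mathbb{0}$. Crisp-deterministic: exactly one $q$ with value $\mathbb{1}$ and all others $\mathbb{0}$. Nerode algebra $\mathcal{N}(\mathcal{A})=(Q_{\mathcal{N}},\theta_{\mathcal{N}},F_{\mathcal{N}})$: smallest subalgebra of $\mathrm{V}(\mathcal{A})$ with $(F_{\mathcal{N}})_v=\bigoplus_q v_q\otimes F_q$; finite if $Q_{\mathcal{N}}$ finite. For finite $(\Sigma,B)$-algebra $(P,\theta,G)$, $\mathrm{rel}(P,\theta,G)=(P,\delta',G)$ with $\delta'_k(p_1\dots p_k,\sigma,p)=\mathbb{1}$ iff $\theta(\sigma)(p_1,\dots,p_k)=p$, else $\mathbb{0}$. *)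

(* Defs.v *)
From Stdlib Require List.
From mathcomp Require Import all_boot.
Set Implicit Arguments. Unset Strict Implicit. Unset Printing Implicit Defensive.

(* Strong bimonoid: commutative monoid (add,zero), monoid (mul,one), 0 <> 1,
   zero absorbing for mul, no distributivity. *)
Record strong_bimonoid := StrongBimonoid {
  car :> Type;
  sadd : car -> car -> car;
  smul : car -> car -> car;
  szero : car;
  sone : car;
  saddA : associative sadd;
  saddC : commutative sadd;
  sadd0l : left_id szero sadd;
  smulA : associative smul;
  smul1l : left_id sone smul;
  smul1r : right_id sone smul;
  smul0l : left_zero szero smul;
  smul0r : right_zero szero smul;
  szero_neq_one : szero <> sone }.

Section Defs.
Variable B : strong_bimonoid.

Definition finite_pred (X : B -> Prop) := exists l : seq B, forall x, X x -> List.In x l.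

Inductive gen_alg (S : seq B) : B -> Prop :=
| ga_in x : List.In x S -> gen_alg S x
| ga_zero : gen_alg S (szero B)
| ga_one : gen_alg S (sone B)
| ga_add x y : gen_alg S x -> gen_alg S y -> gen_alg S (sadd x y)
| ga_mul x y : gen_alg S x -> gen_alg S y -> gen_alg S (smul x y).

Inductive gen_mon (S : seq B) : B -> Prop :=
| gm_in x : List.In x S -> gen_mon S x
| gm_one : gen_mon S (sone B)
| gm_mul x y : gen_mon S x -> gen_mon S y -> gen_mon S (smul x y).

Definition locally_finite := forall S : seq B, finite_pred (gen_alg S).
Definition mult_locally_finite := forall S : seq B, finite_pred (gen_mon S).
End Defs.

Section Trees.
(* ranked alphabet: finite set Sigma with rank function rk; Sigma^(k) = {s | rk s = k} *)
Variables (Sigma : finType) (rk : Sigma -> nat).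

Inductive tree := Node (s : Sigma) (ts : 'I_(rk s) -> tree).

Variable B : strong_bimonoid.

(* (Sigma,B)-wta; delta s ps q stands for delta_k(p_1..p_k, s, q) with k = rk s *)
Record wta := Wta {
  st : finType;
  delta : forall s : Sigma, {ffun 'I_(rk s) -> st} -> st -> B;
  fin : st -> B }.

Variable A : wta.

Definition bu_deterministic :=
  forall s ps q q', @delta A s ps q <> szero B -> @delta A s ps q' <> szero B -> q = q'.

Definition deltaV (s : Sigma) (vs : 'I_(rk s) -> st A -> B) : st A -> B :=
  fun q => \big[@sadd B/szero B]_(p : {ffun 'I_(rk s) -> st A})
             smul (\big[@smul B/sone B]_(i < rk s) vs i (p i)) (@delta A s p q).

Fixpoint hV (t : tree) : st A -> B :=
  match t with Node s ts => deltaV (fun i => hV (ts i)) end.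

Definition sem (t : tree) : B :=
  \big[@sadd B/szero B]_(q : st A) smul (hV t q) (@fin A q).

Inductive nerode : (st A -> B) -> Prop :=
| nerode_step s (vs : 'I_(rk s) -> st A -> B) :
    (forall i, nerode (vs i)) -> nerode (deltaV vs).

Definition FN (v : st A -> B) : B := \big[@sadd B/szero B]_(q : st A) smul (v q) (@fin A q).
End Trees.

Definition rel_alg (Sigma : finType) (rk : Sigma -> nat) (B : strong_bimonoid) (P : finType)
  (theta : forall s : Sigma, ('I_(rk s) -> P) -> P) (G : P -> B) : wta rk B :=
  @Wta Sigma rk B P (fun s ps p => if theta s ps == p then sone B else szero B) G.

Arguments nerode {Sigma rk B} A _.
Arguments deltaV {Sigma rk B} A s vs _.
Arguments hV {Sigma rk B} A t _.
Arguments sem {Sigma rk B} A t.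
Arguments FN {Sigma rk B} A v.
Arguments bu_deterministic {Sigma rk B} A.
Arguments tree {Sigma} rk.

(* Main.v *)
From HB Require Import structures.
Require Import Defs.
From mathcomp Require Import all_boot.
From Stdlib Require List ClassicalEpsilon FunctionalExtensionality Classical.

Section Bi.
Variable B : strong_bimonoid.
HB.instance Definition _ := Monoid.isComLaw.Build B (szero B) (@sadd B) (@saddA B) (@saddC B) (@sadd0l B).
HB.instance Definition _ := Monoid.isLaw.Build B (sone B) (@smul B) (@smulA B) (@smul1l B) (@smul1r B).

Lemma sadd0r (x : B) : sadd x (szero B) = x.
Proof. by rewrite saddC sadd0l. Qed.

Lemma big_sadd_one (I : finType) (j : I) (F : I -> B) :
  (forall i, i != j -> F i = szero B) -> \big[@sadd B/szero B]_i F i = F j.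
Proof.
move=> H; rewrite (bigD1 j) // big1; [exact: sadd0r | move=> i; exact: H].
Qed.

Lemma prod_zero n (F : 'I_n -> B) i : F i = szero B -> \big[@smul B/sone B]_(k < n) F k = szero B.
Proof.
elim: n F i => [|n IH] F i; first by case: i.
rewrite big_ord_recl; case: (unliftP ord0 i) => [j ->|->] H.
  by rewrite (IH _ j) // smul0r.
by rewrite H smul0l.
Qed.
End Bi.

Lemma In_of_mem (T : eqType) (x : T) (s : seq T) : x \in s -> List.In x s.
Proof.
elim: s => //= y s IH; rewrite in_cons => /orP [/eqP ->|/IH]; auto.
Qed.

Lemma In_nth' (T : Type) (d x : T) (l : seq T) : List.In x l -> exists i : 'I_(size l), nth d l i = x.
Proof.
elim: l => //= y l IH [<-|/IH [[n Hn] <-]].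
  by exists (@Ordinal (size l).+1 0 isT).
by exists (@Ordinal (size l).+1 n.+1 Hn).
Qed.

Definition asb (P : Prop) : bool :=
  if ClassicalEpsilon.excluded_middle_informative P then true else false.
Lemma asbP P : reflect P (asb P).
Proof. rewrite /asb; case: ClassicalEpsilon.excluded_middle_informative => H; by constructor. Qed.

Section Sem.
Variables (Sigma : finType) (rk : Sigma -> nat) (B : strong_bimonoid) (A : wta rk B).
Variables (P : finType) (emb : P -> st A -> B) (theta : forall s : Sigma, ('I_(rk s) -> P) -> P).
Hypothesis Hhom : forall s ps, emb (theta s ps) = deltaV A s (fun i => emb (ps i)).

Fixpoint run (t : tree rk) : P := match t with Node s ts => theta s (fun i => run (ts i)) end.

Lemma emb_run t : emb (run t) = hV A t.
Proof.
elim: t => s ts IH /=; rewrite Hhom; congr (deltaV A s _).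
apply: FunctionalExtensionality.functional_extensionality => i; exact: IH.
Qed.

Let R := @rel_alg Sigma rk B P theta (fun p => FN A (emb p)).

Lemma hV_rel t p : hV R t p = if run t == p then sone B else szero B.
Proof.
elim: t p => s ts IH p /=; rewrite /deltaV.
rewrite (@big_sadd_one _ _ ([ffun i => run (ts i)])).
  rewrite big1 => [|i _]; last by rewrite ffunE IH eqxx.
  rewrite smul1l /=.
  have -> : fun_of_fin [ffun i => run (ts i)] = (fun i => run (ts i)).
    by apply: FunctionalExtensionality.functional_extensionality => i; rewrite ffunE.
  by [].
move=> ps Hps.
have [i Hi] : exists i, run (ts i) != ps i.
  apply/existsP; move: Hps; apply: contraNT => /existsPn H.
  apply/eqP/ffunP => i; rewrite ffunE; move: (H i); rewrite negbK => /eqP.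
  by [].
by rewrite (@prod_zero _ _ _ i) ?smul0l // IH (negbTE Hi).
Qed.

Lemma sem_rel t : sem A t = sem R t.
Proof.
rewrite /sem [RHS](@big_sadd_one _ _ (run t)).
  by rewrite hV_rel eqxx smul1l /FN -(emb_run t).
by move=> p Hp; rewrite hV_rel eq_sym (negbTE Hp) smul0l.
Qed.
End Sem.

Section Vals.
Variables (Sigma : finType) (rk : Sigma -> nat) (B : strong_bimonoid) (A : wta rk B).

Definition Sl : seq B :=
  List.flat_map (fun s => List.flat_map (fun p => List.map (fun q => @delta _ _ _ A s p q)
     (enum (st A))) (enum {ffun 'I_(rk s) -> st A})) (enum Sigma).

Lemma in_Sl s p q : List.In (@delta _ _ _ A s p q) Sl.
Proof.
apply/List.in_flat_map; exists s; split; first by apply: In_of_mem; rewrite mem_enum.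
apply/List.in_flat_map; exists p; split; first by apply: In_of_mem; rewrite mem_enum.
by apply: List.in_map; apply: In_of_mem; rewrite mem_enum.
Qed.

Lemma vals_LF : locally_finite B -> exists l, forall v, nerode A v -> forall q, List.In (v q) l.
Proof.
move=> LF; have [l Hl] := LF Sl; exists l => v Hv q; apply: Hl.
elim: Hv q => s vs _ IH q; rewrite /deltaV.
apply: (big_rec (gen_alg Sl)); first exact: ga_zero.
move=> p x _ Hx; apply: ga_add => //; apply: ga_mul; last exact/ga_in/in_Sl.
apply: (big_rec (gen_alg Sl)); first exact: ga_one.
by move=> i y _ Hy; apply: ga_mul.
Qed.

Lemma vals_MLF : mult_locally_finite B -> bu_deterministic A -> 0 < #|st A| ->
  exists l, forall v, nerode A v -> forall q, List.In (v q) l.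
Proof.
move=> MLF Det /card_gt0P [q0 _].
have [l Hl] := MLF Sl.
pose K := fun x : B => x = szero B \/ gen_mon Sl x.
have Kmul : forall x y, K x -> K y -> K (smul x y).
  move=> x y [->|Hx]; first by left; rewrite smul0l.
  move=> [->|Hy]; first by left; rewrite smul0r.
  by right; apply: gm_mul.
suff H : forall v, nerode A v -> (forall q, K (v q)) /\
   (forall q q', v q <> szero B -> v q' <> szero B -> q = q').
  exists (szero B :: l) => v Hv q; case: ((H v Hv).1 q) => [->|/Hl]; [left|right] => //.
move=> v; elim => {v} s vs _ IH.
have ch : forall i, exists qi, forall q, q != qi -> vs i q = szero B.
  move=> i; case: (Classical_Prop.classic (exists q, vs i q <> szero B)) => [[qi Hqi]|Hn].
    exists qi => q Hq; apply: Classical_Prop.NNPP => Hnz; move/eqP: Hq; apply.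
    exact: (IH i).2 _ _ Hnz Hqi.
  exists q0 => q _; apply: Classical_Prop.NNPP => Hz; apply: Hn; by exists q.
pose f := fun i => proj1_sig (ClassicalEpsilon.constructive_indefinite_description _ (ch i)).
have Hf : forall i q, q != f i -> vs i q = szero B.
  move=> i; exact: (proj2_sig (ClassicalEpsilon.constructive_indefinite_description _ (ch i))).
pose p0 := [ffun i => f i].
have key : forall q, deltaV A s vs q =
    smul (\big[@smul B/sone B]_(i < rk s) vs i (f i)) (@delta _ _ _ A s p0 q).
  move=> q; rewrite /deltaV (@big_sadd_one _ _ (p0)).
    by congr smul; apply: eq_bigr => i _; rewrite ffunE.
  move=> p Hp.
  have [i Hi] : exists i, p i != f i.
    apply/existsP; move: Hp; apply: contraNT => /existsPn H.
    apply/eqP/ffunP => i; rewrite ffunE; move: (H i); rewrite negbK => /eqP.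
    by [].
  by rewrite (@prod_zero _ _ _ i) ?smul0l //; apply: Hf.
split.
  move=> q; rewrite key; apply: (Kmul); last by right; apply/gm_in/in_Sl.
  apply: (big_rec K); first by right; apply: gm_one.
  by move=> i y _ Hy; apply: (Kmul) => //; apply: (IH i).1.
move=> q q'; rewrite !key => Hq Hq'; apply: (Det s p0).
  by move=> H0; apply: Hq; rewrite H0 smul0r.
by move=> H0; apply: Hq'; rewrite H0 smul0r.
Qed.
End Vals.

Theorem corollary6p10 (Sigma : finType) (rk : Sigma -> nat) (B : strong_bimonoid)
  (A : wta rk B) :
  (exists s : Sigma, rk s = 0) ->
  0 < #|st A| ->
  (locally_finite B \/ (mult_locally_finite B /\ bu_deterministic A)) ->
  exists (P : finType) (emb : P -> st A -> B)
         (theta : forall s : Sigma, ('I_(rk s) -> P) -> P),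
    [/\ injective emb,
        (forall v, nerode A v <-> exists p, emb p = v),
        (forall s ps, emb (theta s ps) = deltaV A s (fun i => emb (ps i))) &
        (forall t : tree rk, sem A t = sem (@rel_alg Sigma rk B P theta (fun p => FN A (emb p))) t)].
Proof.
move=> _ Hcard Hcase.
have [l Hl] : exists l, forall v, nerode A v -> forall q, List.In (v q) l.
  case: Hcase => [LF|[MLF Det]]; [exact: vals_LF | exact: vals_MLF].
pose C := {ffun st A -> 'I_(size l)}.
pose decode := fun (f : C) (q : st A) => nth (szero B) l (f q).
have code : forall v, nerode A v -> exists f : C, decode f = v.
  move=> v Hv.
  have ch : forall q, exists i : 'I_(size l), nth (szero B) l i = v q.
    by move=> q; apply: In_nth'; apply: Hl.
  exists [ffun q => proj1_sig (ClassicalEpsilon.constructive_indefinite_description _ (ch q))].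
  apply: FunctionalExtensionality.functional_extensionality => q.
  rewrite /decode ffunE.
  exact: (proj2_sig (ClassicalEpsilon.constructive_indefinite_description _ (ch q))).
pose good := fun f : C => asb (nerode A (decode f) /\
   forall g : C, decode g = decode f -> (enum_rank f <= enum_rank g)%N).
pose P := Finite.clone {f : C | good f} _.
pose emb := fun p : P => decode (val p).
have inj : injective emb.
  move=> [f Hf] [g Hg]; rewrite /emb /= => E.
  apply: val_inj => /=.
  move/asbP: Hf => [_ Hf]; move/asbP: Hg => [_ Hg].
  apply: enum_rank_inj; apply: val_inj; apply/eqP; rewrite eqn_leq.
  by rewrite (Hf g (esym E)) (Hg f E).
have surj : forall v, nerode A v <-> exists p, emb p = v.
  move=> v; split; last by move=> [[f Hf] <-]; have /asbP [] := Hf.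
  move=> Hv.
  have exP : exists n, asb (exists g : C, decode g = v /\ (enum_rank g : nat) = n).
    have [g Hg] := code v Hv; exists (enum_rank g); apply/asbP; by exists g.
  case: (ex_minnP exP) => m /asbP [g [Hg Hm]] Hmin.
  have Gg : good g.
    apply/asbP; split; first by rewrite Hg.
    move=> g' Hg'; rewrite Hm; apply: Hmin; apply/asbP; exists g'; by rewrite Hg' Hg.
  by exists (exist _ g Gg).
have Hth : forall s (ps : 'I_(rk s) -> P), exists p, emb p = deltaV A s (fun i => emb (ps i)).
  move=> s ps; apply/surj; apply: nerode_step => i; apply/surj; by exists (ps i).
pose theta := fun s ps => proj1_sig (ClassicalEpsilon.constructive_indefinite_description _ (Hth s ps)).
have hom : forall s ps, emb (theta s ps) = deltaV A s (fun i => emb (ps i)).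
  move=> s ps; exact: (proj2_sig (ClassicalEpsilon.constructive_indefinite_description _ (Hth s ps))).
exists P, emb, theta; split => //.
exact: sem_rel.
Qed.
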